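(* Let $k\ge2$, $1\le m<k$, and alternatives $\ell=1,\dots,k$ with i.i.d. replications (independent across alternatives) whose means are pairwise distinct and ordered $\mu_{\langle 1\rangle}>\dots>\mu_{\langle k\rangle}$, satisfying Assumptions 1–4 of the context. Let $i\in\{1,\dots,m\}$, $j\in\{m+1,\dots,k\}$ and $r_{\langle i\rangle},r_{\langle j\rangle}>0$. Then the function $x\mapsto r_{\langle i\rangle}\Lambda^*_{\langle i\rangle}(x)+r_{\langle j\rangle}\Lambda^*_{\langle j\rangle}(x)$ has a unique infimum (minimizing) point.
   Context: $\bar X_\ell(n)$ is the sample mean of $n$ replications of alternative $\ell$, $\Lambda^{(n)}_\ell(\lambda)=\log\mathbb E[e^{\lambda\bar X_\ell(n)}]$. Assumption 1: $\Lambda_\ell(\lambda)=\lim_{n\to\infty}\frac1n\Lambda^{(n)}_\ell(n\lambda)$ exists as an extended real number for all $\lambda$. With $\mathcal D_{\Lambda_\ell}=\{\lambda:\Lambda_\ell(\lambda)<\infty\}$, interior $\mathcal D^o_{\Lambda_\ell}$, and $\mathcal F_\ell=\{\Lambda'_\ell(\lambda):\lambda\in\mathcal D^o_{\Lambda_\ell}\}$, interior $\mathcal F^o_\ell$: Assumption 2: $0\in\mathcal D^o_{\Lambda_\ell}$. Assumption 3: $\Lambda_\ell$ strictly convex, continuous on $\mathcal D^o_{\Lambda_\ell}$ and steep ($|\Lambda'_\ell(\lambda_n)|\to\infty$ along sequences tending to a boundary point of $\mathcal D^o_{\Lambda_\ell}$). Assumption 4: $[\mu_{\langle k\rangle},\mu_{\langle1\rangle}]\subset\bigcap_\ell\mathcal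 F^o_\ell$. $\Lambda^*_\ell(x)=\sup_\lambda\{\lambda x-\Lambda_\ell(\lambda)\}$. *)

(* Defs.v *)
From HB Require Import structures.
From mathcomp Require Import all_boot all_order all_algebra.
From mathcomp Require Import all_classical all_reals all_analysis.
Set Implicit Arguments. Unset Strict Implicit. Unset Printing Implicit Defensive.
Import Order.TTheory GRing.Theory Num.Theory.
Import numFieldNormedType.Exports.
Local Open Scope classical_set_scope.
Local Open Scope ring_scope.
Local Open Scope ereal_scope.

Section Defs.
Context (R : realType).

(* Limiting scaled log-MGF of the sample mean of i.i.d. replications of X:
   (1/n) log E[exp(n l Xbar(n))] = log E[exp(l X)] for every n, so
   Lambda(l) = log E[exp (l X)]  (value +oo when the MGF is infinite). *)
Definition cgf d (T : measurableType d) (P : probability T R) (X : T -> R)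
  (l : R) : \bar R :=
  match 'E_P[fun t => expR (l * X t)] with
  | r%:E => (ln r)%:E
  | _ => +oo
  end.

Definition legendre (L : R -> \bar R) (x : R) : \bar R :=
  ereal_sup [set (l * x)%:E - L l | l in [set: R]].

Definition dom_eff (L : R -> \bar R) : set R := [set l | L l < +oo].
Definition dom_int (L : R -> \bar R) : set R := interior (dom_eff L).

Definition Lfin (L : R -> \bar R) : R -> R := fun l => fine (L l).

Definition grad_range (L : R -> \bar R) : set R :=
  [set derive1 (Lfin L) l | l in dom_int L].

Definition assumption2 (L : R -> \bar R) : Prop := dom_int L 0%R.

(* Assumption 3: strictly convex, continuous (and differentiable, so that
   Lambda' makes sense) on the interior of the domain, and steep. *)
Definition assumption3 (L : R -> \bar R) : Prop :=
  [/\ (forall x y t : R, dom_int L x -> dom_int L y -> x != y ->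
         (0 < t < 1)%R ->
         (Lfin L (t * x + (1 - t) * y) < t * Lfin L x + (1 - t) * Lfin L y)%R),
      (forall x, dom_int L x -> {for x, continuous (Lfin L)}),
      (forall x, dom_int L x -> derivable (Lfin L) x 1%R) &
      (forall (s : nat -> R) (b : R), (forall n, dom_int L (s n)) ->
         (closure (dom_int L) `\` dom_int L) b ->
         s @ \oo --> b ->
         (fun n => `|derive1 (Lfin L) (s n)|%R) @ \oo --> +oo%R)].

End Defs.

(* Main.v *)
Require Import Defs.
From HB Require Import structures.
From mathcomp Require Import all_boot all_order all_algebra.
From mathcomp Require Import all_classical all_reals all_analysis.
From mathcomp Require Import measurable_realfun.
From mathcomp Require Import ring lra.
Import Order.TTheory GRing.Theory Num.Theory.
Import numFieldNormedType.Exports.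
Local Open Scope classical_set_scope.
Local Open Scope ring_scope.
Set Implicit Arguments. Unset Strict Implicit.

Section RealLemmas.
Context (R : realType).

Lemma deriv_ed (f : R -> R) x : derivable f x 1 ->
  forall e : R, 0 < e -> exists2 d : R, 0 < d &
   forall h : R, 0 < `|h| < d -> `|(f (x + h) - f x) / h - derive1 f x| < e.
Proof.
move=> df e e0.
have E : derive1 f x = derive f x 1 by rewrite derive1E.
rewrite E.
have H := cvgP _ df.
have := (cvgrPdist_lt _ _).1 H e e0.
move=> /= -[d d0 Hd].
exists d => // h /andP[h0 hd].
have := Hd h.
rewrite /= sub0r normrN distrC.
move=> /(_ hd).
have hn0 : h != 0 by rewrite -normr_gt0.
move=> /(_ hn0).
have -> : (f (x + h) - f x) / h = h^-1 *: (f (h%:A + x) - f x).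
  by rewrite mulrC -[h%:A]/(h * 1) mulr1 (addrC h).
move=> H1; exact: H1.
Qed.

Lemma deriv_ed2 (f : R -> R) x : derivable f x 1 ->
  forall e : R, 0 < e -> exists2 d : R, 0 < d &
   forall h : R, 0 < h < d ->
     (derive1 f x - e) * h < f (x + h) - f x < (derive1 f x + e) * h /\
     (derive1 f x + e) * (- h) < f (x - h) - f x < (derive1 f x - e) * (- h).
Proof.
move=> df e e0; have [d d0 Hd] := deriv_ed df e0.
exists d => // h /andP[h0 hd].
have hp : 0 < `|h| < d by rewrite gtr0_norm // h0 hd.
have hn : 0 < `|- h| < d by rewrite normrN gtr0_norm // h0 hd.
have := Hd _ hp; have := Hd _ hn.
set D := derive1 f x.
rewrite !ltr_norml => /andP[a1 a2] /andP[b1 b2].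
have hn0 : h != 0 by rewrite gt_eqF.
have hN0 : - h != 0 by rewrite oppr_eq0.
move: a1 a2 b1 b2.

set q1 := (f (x - h) - f x) / - h.
set q2 := (f (x + h) - f x) / h.
have e1 : f (x + h) - f x = q2 * h by rewrite /q2 divfK.
have e2 : f (x - h) - f x = q1 * - h by rewrite /q1 divfK.
rewrite e1 e2 => a1 a2 b1 b2.
split; apply/andP; split; nra.
Qed.

Lemma small_pos (d e : R) : 0 < d -> 0 < e -> exists h, [/\ 0 < h, h < d & h < e].
Proof.
move=> d0 e0; case: (leP d e) => H.
- by exists (d / 2); split; lra.
- by exists (e / 2); split; lra.
Qed.

Lemma deriv_right_le (f : R -> R) x S e : derivable f x 1 -> 0 < e ->
  (forall h, 0 < h < e -> f (x + h) - f x <= h * S) -> derive1 f x <= S.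
Proof.
move=> df e0 H; rewrite leNgt; apply/negP => DS.
have DS0 : 0 < derive1 f x - S by rewrite subr_gt0.
have [d d0 Hd] := deriv_ed2 df DS0.
have [h [h0 hd he]] := small_pos d0 e0.
have hhd : 0 < h < d by rewrite h0 hd.
have hhe : 0 < h < e by rewrite h0 he.
have [/andP[a1 a2] _] := Hd h hhd.
have := H h hhe; nra.
Qed.

Lemma deriv_right_ge (f : R -> R) x S e : derivable f x 1 -> 0 < e ->
  (forall h, 0 < h < e -> h * S <= f (x + h) - f x) -> S <= derive1 f x.
Proof.
move=> df e0 H; rewrite leNgt; apply/negP => DS.
have DS0 : 0 < S - derive1 f x by rewrite subr_gt0.
have [d d0 Hd] := deriv_ed2 df DS0.
have [h [h0 hd he]] := small_pos d0 e0.
have hhd : 0 < h < d by rewrite h0 hd.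
have hhe : 0 < h < e by rewrite h0 he.
have [/andP[a1 a2] _] := Hd h hhd.
have := H h hhe; nra.
Qed.

Lemma deriv_left_ge (f : R -> R) x S e : derivable f x 1 -> 0 < e ->
  (forall h, 0 < h < e -> f (x - h) - f x <= (- h) * S) -> S <= derive1 f x.
Proof.
move=> df e0 H; rewrite leNgt; apply/negP => DS.
have DS0 : 0 < S - derive1 f x by rewrite subr_gt0.
have [d d0 Hd] := deriv_ed2 df DS0.
have [h [h0 hd he]] := small_pos d0 e0.
have hhd : 0 < h < d by rewrite h0 hd.
have hhe : 0 < h < e by rewrite h0 he.
have [_ /andP[a1 a2]] := Hd h hhd.
have := H h hhe; nra.
Qed.

Lemma deriv_left_le (f : R -> R) x S e : derivable f x 1 -> 0 < e ->
  (forall h, 0 < h < e -> (- h) * S <= f (x - h) - f x) -> derive1 f x <= S.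
Proof.
move=> df e0 H; rewrite leNgt; apply/negP => DS.
have DS0 : 0 < derive1 f x - S by rewrite subr_gt0.
have [d d0 Hd] := deriv_ed2 df DS0.
have [h [h0 hd he]] := small_pos d0 e0.
have hhd : 0 < h < d by rewrite h0 hd.
have hhe : 0 < h < e by rewrite h0 he.
have [_ /andP[a1 a2]] := Hd h hhd.
have := H h hhe; nra.
Qed.

Lemma nbhsRP (A : set R) x : nbhs x A <-> exists2 e, 0 < e & forall y, `|y - x| < e -> A y.
Proof.
split.
- move=> /nbhs_ballP [e e0 H]; exists e => // y hy; apply: H.
  by rewrite -ball_normE /= distrC.
- move=> [e e0 H]; apply/nbhs_ballP; exists e => // y hy; apply: H.
  by move: hy; rewrite -ball_normE /= distrC.
Qed.

End RealLemmas.

Section mgf.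
Context (R : realType) d (T : measurableType d) (P : probability T R)
  (X : T -> R) (mX : measurable_fun setT X).
Local Open Scope ereal_scope.

Definition mgf t := 'E_P[fun w => expR (t * X w)].

Lemma mexp t : measurable_fun setT (fun w => expR (t * X w)).
Proof.
apply: measurableT_comp => //.
exact: measurable_realfun.measurable_funM.
Qed.

Lemma E_def t : mgf t = \int[P]_w (expR (t * X w))%:E.
Proof. by rewrite /mgf unlock. Qed.

Lemma E_ge0 t : 0 <= mgf t.
Proof. by rewrite E_def; apply: integral_ge0 => w _; rewrite lee_fin expR_ge0. Qed.

Lemma E0 : mgf 0 = 1.
Proof.
rewrite E_def.
under eq_integral do rewrite mul0r expR0.
by rewrite integral_cst //= probability_setT mule1.
Qed.

Lemma integrable_of_fin (g : T -> R) : measurable_fun setT g ->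
  (\int[P]_w (g w)%:E) \is a fin_num -> P.-integrable setT (EFin \o g).
Proof.
move=> mg fg.

apply/integrableP; split; first exact/measurable_EFinP.
rewrite -[fun x => _]/(abse \o (EFin \o g)) fune_abse.
rewrite ge0_integralD //; last 2 first.
- by apply: measurable_funepos; exact/measurable_EFinP.
- by apply: measurable_funeneg; exact/measurable_EFinP.
have fg' : \int[P]_(x in setT) (EFin \o g)^\+ x - \int[P]_(x in setT) (EFin \o g)^\- x \is a fin_num.
  by rewrite -integralE.
have p0 : 0 <= \int[P]_(x in setT) (EFin \o g)^\+ x by apply: integral_ge0 => x _; exact: funepos_ge0.
have n0 : 0 <= \int[P]_(x in setT) (EFin \o g)^\- x by apply: integral_ge0 => x _; exact: funeneg_ge0.
move: p0 n0 fg'.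
case: (\int[P]_(x in setT) (EFin \o g)^\+ x) => [p| |] //;
case: (\int[P]_(x in setT) (EFin \o g)^\- x) => [n| |] //.
by move=> _ _ _; rewrite -EFinD ltry.
Qed.

Lemma E_jensen mu : 'E_P[X] = mu%:E -> forall t, (expR (t * mu))%:E <= mgf t.
Proof.
move=> hX t.
have iX : P.-integrable setT (EFin \o X).
  apply: integrable_of_fin => //; have := hX; rewrite unlock => ->; done.
have hX' : \int[P]_w (X w)%:E = mu%:E by have := hX; rewrite unlock.
have := E_ge0 t.
case Et: (mgf t) => [r| |]; [move=> _ | by move=> _; rewrite leey | by []].
have ie : P.-integrable setT (EFin \o (fun w => expR (t * X w))).
  by apply: integrable_of_fin; [exact: mexp | rewrite -E_def Et].
set c := expR (t * mu).
have key : \int[P]_w ((EFin \o cst (c * (1 - t * mu))%R) w + (c * t)%R%:E * (EFin \o X) w) = c%:E.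
  rewrite integralD //; last 2 first.
  - exact: finite_measure_integrable_cst.
  - exact: integrableZl.
  rewrite integralZl // -/(\int[P]_w (X w)%:E) hX'.
  rewrite -[(EFin \o cst _)]/(cst (c * (1 - t * mu))%R%:E) integral_cst //.
  rewrite /= probability_setT.
  rewrite mule1.
  by rewrite -EFinM -EFinD; congr (_%:E); ring.
rewrite -Et E_def -key; apply: le_integral => //.
  apply: integrableD => //.
  - exact: finite_measure_integrable_cst.
  - exact: integrableZl.
move=> w _ /=; rewrite -EFinM -EFinD lee_fin.
have -> : (t * X w = t * mu + (t * X w - t * mu))%R by ring.
rewrite expRD -/c.
have h := expR_ge1Dx (t * X w - t * mu)%R.
have c0 : (0 < c)%R by exact: expR_gt0.
apply: (le_trans _ (ler_wpM2l (ltW c0) h)).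
by rewrite le_eqVlt; apply/orP; left; apply/eqP; ring.
Qed.

Lemma mexpE t : measurable_fun setT (fun w => (expR (t * X w))%:E).
Proof. exact/measurable_EFinP/mexp. Qed.

Lemma E_convex a b Ma Mb s : mgf a = Ma%:E -> mgf b = Mb%:E -> (0 < Ma)%R -> (0 < Mb)%R ->
  (0 <= s <= 1)%R ->
  mgf (s * a + (1 - s) * b)%R <= (expR (s * ln Ma + (1 - s) * ln Mb))%:E.
Proof.
move=> Ea Eb Ma0 Mb0 /andP[s0 s1].
set K := expR (s * ln Ma + (1 - s) * ln Mb).
have K0 : (0 < K)%R by exact: expR_gt0.
have c1 : (0 <= K * s / Ma)%R by apply: divr_ge0; [apply: mulr_ge0 => //; exact: ltW | exact: ltW].
have c2 : (0 <= K * (1 - s) / Mb)%R by apply: divr_ge0; [apply: mulr_ge0; [exact: ltW | rewrite subr_ge0] | exact: ltW].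
rewrite E_def.
apply: (@le_trans _ _ (\int[P]_w ((K * s / Ma)%:E * (expR (a * X w))%:E
                          + (K * (1 - s) / Mb)%:E * (expR (b * X w))%:E))).
  apply: (ge0_le_integral P measurableT).
  - by move=> w _; rewrite lee_fin expR_ge0.
  - exact: mexpE.
  - apply: emeasurable_funD; apply: emeasurable_funM => //; exact: mexpE.
  move=> w _; rewrite -!EFinM -EFinD lee_fin.
  set u := (a * X w - ln Ma)%R.
  set v := (b * X w - ln Mb)%R.
  have Hu : (expR (a * X w) = Ma * expR u)%R by rewrite /u expRB lnK ?posrE // mulrCA divff ?mulr1 // gt_eqF.
  have Hv : (expR (b * X w) = Mb * expR v)%R by rewrite /v expRB lnK ?posrE // mulrCA divff ?mulr1 // gt_eqF.
  have -> : ((s * a + (1 - s) * b) * X w = (s * ln Ma + (1 - s) * ln Mb) + (s * u + (1 - s) * v))%R.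
    by rewrite /u /v; ring.
  rewrite expRD -/K Hu Hv.
  have -> : (K * s / Ma * (Ma * expR u) + K * (1 - s) / Mb * (Mb * expR v)
     = K * (s * expR u + (1 - s) * expR v))%R.
    by field; rewrite !gt_eqF.
  apply: ler_wpM2l; first exact: ltW.
  set m := (s * u + (1 - s) * v)%R.
  have h1 := expR_ge1Dx (u - m)%R.
  have h2 := expR_ge1Dx (v - m)%R.
  have em : (0 < expR m)%R by exact: expR_gt0.
  have hu : (expR m * (1 + (u - m)) <= expR u)%R.
    by have := ler_wpM2l (ltW em) h1; rewrite -expRD [(m + _)%R]addrC subrK.
  have hv : (expR m * (1 + (v - m)) <= expR v)%R.
    by have := ler_wpM2l (ltW em) h2; rewrite -expRD [(m + _)%R]addrC subrK.
  have s1' : (0 <= 1 - s)%R by rewrite subr_ge0.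
  have := lerD (ler_wpM2l s0 hu) (ler_wpM2l s1' hv).
  apply: le_trans; rewrite le_eqVlt; apply/orP; left; apply/eqP.
  by rewrite /m; ring.
rewrite ge0_integralD //; try (by move=> w _; rewrite -EFinM lee_fin mulr_ge0 // expR_ge0);
  try (by apply: emeasurable_funM => //; exact: mexpE).
rewrite !ge0_integralZl_EFin //; try (by move=> w _; rewrite lee_fin expR_ge0); try exact: mexpE.
rewrite -!E_def Ea Eb -!EFinM -EFinD lee_fin le_eqVlt; apply/orP; left; apply/eqP.
by field; rewrite !gt_eqF.
Qed.

End mgf.
Section RealLemmas2.
Context (R : realType).

Lemma deriv_support (f : R -> R) x z e : derivable f x 1 -> 0 < e ->
  (forall y, `|y - x| < e -> f x + (y - x) * z <= f y) -> derive1 f x = z.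
Proof.
move=> df e0 H; apply/eqP; rewrite eq_le; apply/andP; split.
- apply: (deriv_left_le (e := e) df e0) => h /andP[h0 he].
  have := H (x - h); rewrite (_ : x - h - x = - h); last by ring.
  rewrite normrN gtr0_norm // => /(_ he); lra.
- apply: (deriv_right_ge (e := e) df e0) => h /andP[h0 he].
  have := H (x + h); rewrite (_ : x + h - x = h); last by ring.
  rewrite gtr0_norm // => /(_ he); lra.
Qed.

Lemma small_pos3 (d1 d2 d3 : R) : 0 < d1 -> 0 < d2 -> 0 < d3 ->
  exists h, [/\ 0 < h, h < d1, h < d2 & h < d3].
Proof.
move=> h1 h2 h3.
have [m [m0 m1 m2]] := small_pos h1 h2.
have [h [h0 hm h3']] := small_pos m0 h3.
exists h; split => //; lra.
Qed.

Lemma min_right (f g : R -> R) x u a b e : derivable f x 1 -> derivable g u 1 ->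
  0 < a -> 0 < b -> 0 < e ->
  (forall h, 0 < h < e -> a * f x + b * g u <= a * f (x + h) + b * g (u - (a / b) * h)) ->
  derive1 g u <= derive1 f x.
Proof.
move=> df dg a0 b0 e0 H; rewrite leNgt; apply/negP => lt.
set ep := (derive1 g u - derive1 f x) / 2.
have ep0 : 0 < ep by rewrite /ep divr_gt0 // subr_gt0.
have [d1 d10 H1] := deriv_ed2 df ep0.
have [d2 d20 H2] := deriv_ed2 dg ep0.
have ab0 : 0 < a / b by exact: divr_gt0.
have [h [h0 hd1 hd2 he]] := small_pos3 d10 (ltac:(exact: (divr_gt0 d20 ab0)) : 0 < d2 / (a / b)) e0.
have k0 : 0 < a / b * h by exact: mulr_gt0.
have kd2 : a / b * h < d2 by move: hd2; rewrite ltr_pdivlMr // mulrC.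
have hh1 : 0 < h < d1 by rewrite h0 hd1.
have hh2 : 0 < a / b * h < d2 by rewrite k0 kd2.
have hhe : 0 < h < e by rewrite h0 he.
have [/andP[_ A] _] := H1 h hh1.
have [_ /andP[_ B]] := H2 _ hh2.
have := H h hhe.
have E1 : b * (a / b * h) = a * h by field; rewrite gt_eqF.
set Df := derive1 f x; set Dg := derive1 g u.
move: A B; set F1 := f (x + h); set G1 := g (u - a / b * h).
move=> A B C.
have A' : a * (F1 - f x) < a * ((Df + ep) * h) by rewrite ltr_pM2l.
have B' : b * (G1 - g u) < b * ((Dg - ep) * - (a / b * h)) by rewrite ltr_pM2l.
have E2 : b * ((Dg - ep) * - (a / b * h)) = - (a * h) * (Dg - ep).
  by field; rewrite gt_eqF.
rewrite E2 in B'.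
have E3 : ep * 2 = Dg - Df by rewrite /ep divfK // pnatr_eq0.
nra.
Qed.

Lemma min_left (f g : R -> R) x u a b e : derivable f x 1 -> derivable g u 1 ->
  0 < a -> 0 < b -> 0 < e ->
  (forall h, 0 < h < e -> a * f x + b * g u <= a * f (x - h) + b * g (u + (a / b) * h)) ->
  derive1 f x <= derive1 g u.
Proof.
move=> df dg a0 b0 e0 H; rewrite leNgt; apply/negP => lt.
set ep := (derive1 f x - derive1 g u) / 2.
have ep0 : 0 < ep by rewrite /ep divr_gt0 // subr_gt0.
have [d1 d10 H1] := deriv_ed2 df ep0.
have [d2 d20 H2] := deriv_ed2 dg ep0.
have ab0 : 0 < a / b by exact: divr_gt0.
have [h [h0 hd1 hd2 he]] := small_pos3 d10 (ltac:(exact: (divr_gt0 d20 ab0)) : 0 < d2 / (a / b)) e0.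
have k0 : 0 < a / b * h by exact: mulr_gt0.
have kd2 : a / b * h < d2 by move: hd2; rewrite ltr_pdivlMr // mulrC.
have hh1 : 0 < h < d1 by rewrite h0 hd1.
have hh2 : 0 < a / b * h < d2 by rewrite k0 kd2.
have hhe : 0 < h < e by rewrite h0 he.
have [_ /andP[_ A]] := H1 h hh1.
have [/andP[_ B] _] := H2 _ hh2.
have := H h hhe.
have E1 : b * (a / b * h) = a * h by field; rewrite gt_eqF.
set Df := derive1 f x; set Dg := derive1 g u.
move: A B; set F1 := f (x - h); set G1 := g (u + a / b * h).
move=> A B C.
have A' : a * (F1 - f x) < a * ((Df - ep) * - h) by rewrite ltr_pM2l.
have B' : b * (G1 - g u) < b * ((Dg + ep) * (a / b * h)) by rewrite ltr_pM2l.
have E2 : b * ((Dg + ep) * (a / b * h)) = (a * h) * (Dg + ep).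
  by field; rewrite gt_eqF.
rewrite E2 in B'.
have E3 : ep * 2 = Df - Dg by rewrite /ep divfK // pnatr_eq0.
nra.
Qed.

End RealLemmas2.
Section cgfsec.
Context (R : realType) d (T : measurableType d) (P : probability T R)
  (X : T -> R) (mX : measurable_fun setT X) (mu : R) (hmu : ('E_P[X] = mu%:E)%E).
Local Notation L := (cgf P X).
Local Notation F := (Lfin (cgf P X)).

Lemma cgfE t : L t = match mgf P X t with r%:E => (ln r)%:E | _ => +oo%E end.
Proof. by []. Qed.

Lemma cgf_cases t : (L t = +oo)%E \/
  exists r, [/\ mgf P X t = r%:E, 0 < r & L t = (ln r)%:E].
Proof.
have := E_jensen mX hmu t.
rewrite /cgf -/(mgf P X t).
case: (mgf P X t) => [r| |] H.
- right; exists r; split => //.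
  by apply: lt_le_trans (expR_gt0 (t * mu)) _; rewrite -lee_fin.
- by left.
- by left.
Qed.

Lemma dom_effP t : dom_eff L t <->
  exists r, [/\ mgf P X t = r%:E, 0 < r & L t = (ln r)%:E].
Proof.
split.
- rewrite /dom_eff /=; case: (cgf_cases t) => [->|//]; by rewrite ltxx.
- by move=> [r [_ _ H]]; rewrite /dom_eff /= H ltry.
Qed.

Lemma FE t r : L t = (ln r)%:E -> F t = ln r.
Proof. by rewrite /Lfin => ->. Qed.

Lemma Lfin_ge t : dom_eff L t -> t * mu <= F t.
Proof.
move=> /dom_effP [r [Er r0 Lr]]; rewrite (FE Lr).
have := E_jensen mX hmu t; rewrite Er lee_fin => H.
by rewrite -(expRK (t * mu)) ler_ln // posrE expR_gt0.
Qed.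

Lemma L0 : L 0 = 0%E.
Proof. by rewrite /cgf -/(mgf P X 0) E0 ln1. Qed.

Lemma F0 : F 0 = 0.
Proof. by rewrite /Lfin L0. Qed.

Lemma dom_conv a b s : dom_eff L a -> dom_eff L b -> 0 <= s <= 1 ->
  dom_eff L (s * a + (1 - s) * b) /\
  F (s * a + (1 - s) * b) <= s * F a + (1 - s) * F b.
Proof.
move=> /dom_effP [ra [Ea ra0 La]] /dom_effP [rb [Eb rb0 Lb]] hs.
have H := E_convex mX Ea Eb ra0 rb0 hs.
have := E_ge0 P X (s * a + (1 - s) * b).
have := E_jensen mX hmu (s * a + (1 - s) * b).
rewrite (FE La) (FE Lb).
rewrite /dom_eff /= /Lfin (cgfE (s * a + (1 - s) * b)).
move: H; case: (mgf P X (s * a + (1 - s) * b)) => [r| |] //=.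
- rewrite !lee_fin => H1 H2 _; split; first by rewrite ltry.
  have r0 : 0 < r by apply: lt_le_trans H2; exact: expR_gt0.
  by rewrite -(expRK (s * ln ra + (1 - s) * ln rb)) ler_ln // posrE expR_gt0.

Qed.

Lemma dom_between a b z : dom_eff L a -> dom_eff L b -> a <= z <= b -> dom_eff L z.
Proof.
move=> da db /andP[az zb].
case: (ltP a b) => ab; last first.
  by have -> : z = a by apply/eqP; rewrite eq_le az (le_trans zb ab).
have ba : 0 < b - a by rewrite subr_gt0.
have hs : 0 <= (b - z) / (b - a) <= 1.
  apply/andP; split; first by apply: divr_ge0; lra.
  by rewrite ler_pdivrMr // mul1r; lra.
have [H _] := dom_conv da db hs.
move: H.
have -> : (b - z) / (b - a) * a + (1 - (b - z) / (b - a)) * b = z.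
  by field; rewrite subr_eq0 gt_eqF.
done.
Qed.

Lemma dom_int_sub t : dom_int L t -> dom_eff L t.
Proof. exact: interior_subset. Qed.

Lemma dom_int_between a b z : dom_int L a -> dom_int L b -> a <= z <= b -> dom_int L z.
Proof.
move=> da db /andP[az zb].
case: (eqVneq z a) => [->//|za].
case: (eqVneq z b) => [->//|zb'].
have az' : a < z by rewrite lt_neqAle eq_sym za az.
have zb2 : z < b by rewrite lt_neqAle zb' zb.
rewrite /dom_int /interior /=.
apply/nbhsRP.
have [e [e0 ea eb]] := small_pos (ltac:(by rewrite subr_gt0) : 0 < z - a) (ltac:(by rewrite subr_gt0) : 0 < b - z).
exists e => // y hy.
apply: (dom_between (dom_int_sub da) (dom_int_sub db)).
move: hy; rewrite ltr_norml => /andP[h1 h2].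
apply/andP; split; lra.
Qed.

Lemma tangent lam l : dom_int L lam -> derivable F lam 1 -> dom_eff L l ->
  F lam + derive1 F lam * (l - lam) <= F l.
Proof.
move=> dl df de.
have dlam := dom_int_sub dl.
case: (ltgtP l lam) => hl; last by rewrite hl subrr mulr0 addr0.
- set S := (F l - F lam) / (l - lam).
  have ln0 : l - lam != 0 by rewrite subr_eq0 lt_eqF.
  have H : S <= derive1 F lam.
    apply: (deriv_left_ge (e := lam - l) df); first by rewrite subr_gt0.
    move=> h /andP[h0 he].
    set s := h / (lam - l).
    have lp : 0 < lam - l by rewrite subr_gt0.
    have hs : 0 <= s <= 1.
      apply/andP; split; first by apply: divr_ge0; lra.
      by rewrite ler_pdivrMr // mul1r; lra.
    have [_ Hc] := dom_conv de dlam hs.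
    have E1 : s * l + (1 - s) * lam = lam - h.
      by rewrite /s; field; rewrite subr_eq0 gt_eqF.
    rewrite E1 in Hc.
    have E2 : - h * S = s * (F l - F lam).
      by rewrite /s /S; field; rewrite ln0 /= subr_eq0 gt_eqF.
    rewrite E2; lra.
  have ES : S * (l - lam) = F l - F lam by rewrite /S divfK.
  have : l - lam < 0 by rewrite subr_lt0.
  nra.
- set S := (F l - F lam) / (l - lam).
  have ln0 : l - lam != 0 by rewrite subr_eq0 gt_eqF.
  have H : derive1 F lam <= S.
    apply: (deriv_right_le (e := l - lam) df); first by rewrite subr_gt0.
    move=> h /andP[h0 he].
    set s := h / (l - lam).
    have lp : 0 < l - lam by rewrite subr_gt0.
    have hs : 0 <= s <= 1.
      apply/andP; split; first by apply: divr_ge0; lra.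
      by rewrite ler_pdivrMr // mul1r; lra.
    have [_ Hc] := dom_conv de dlam hs.
    have E1 : s * l + (1 - s) * lam = lam + h.
      by rewrite /s; field.
    rewrite E1 in Hc.
    have E2 : h * S = s * (F l - F lam).
      by rewrite /s /S; field.
    rewrite E2; lra.
  have ES : S * (l - lam) = F l - F lam by rewrite /S divfK.
  have : 0 < l - lam by rewrite subr_gt0.
  nra.
Qed.

Lemma deriv_mono a b : dom_int L a -> dom_int L b ->
  derivable F a 1 -> derivable F b 1 -> a <= b -> derive1 F a <= derive1 F b.
Proof.
move=> da db dfa dfb ab.
have H1 := tangent da dfa (dom_int_sub db).
have H2 := tangent db dfb (dom_int_sub da).
case: (eqVneq a b) => [->//|nab].
have : 0 < b - a by rewrite subr_gt0 lt_neqAle nab ab.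
nra.
Qed.

Lemma cgf_deriv0 : dom_int L 0 -> derivable F 0 1 -> derive1 F 0 = mu.
Proof.
move=> d0 df.
have [e e0 He] := (nbhsRP _ _).1 d0.
apply: (deriv_support df e0) => y hy.
rewrite F0 add0r subr0; apply: Lfin_ge; apply: He; move: hy; rewrite !subr0 => hy; exact: hy.
Qed.

Lemma cgf_fin t : dom_eff L t -> L t = (F t)%:E.
Proof. by move=> /dom_effP [r [_ _ Lr]]; rewrite (FE Lr) Lr. Qed.

End cgfsec.
Section Main.
Local Open Scope ereal_scope.

Lemma leg_ge (R : realType) (L : R -> \bar R) x l : (l * x)%:E - L l <= legendre L x.
Proof. by apply: ereal_sup_ubound; exists l. Qed.

Lemma leg_le (R : realType) (L : R -> \bar R) x M :
  (forall l, (l * x)%:E - L l <= M) -> legendre L x <= M.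
Proof. by move=> H; apply: ge_ereal_sup => _ [l _ <-]; exact: H. Qed.

End Main.

Lemma psi_cont (R : realType) (f g : R -> R) (a b c t : R) :
  {for t, continuous f} -> {for (c * t)%R, continuous g} ->
  {for t, continuous (fun s => a * f s + b * g (c * s))%R}.
Proof.
move=> cf cg.
apply: continuousD.
  by apply: continuousM => //; exact: cvg_cst.
apply: continuousM; first exact: cvg_cst.
apply: (continuous_comp (f := fun s => (c * s)%R) (g := g)) => //.
by apply: continuousM; [exact: cvg_cst | exact: cvg_id].
Qed.

Unset Implicit Arguments.
Local Open Scope ereal_scope.
Local Open Scope ring_scope.

Theorem lemma2 (R : realType) (d : measure_display) (T : measurableType d)
  (P : probability T R) (k m : nat) (hk : (2 <= k)%N) (hm1 : (1 <= m)%N)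
  (hmk : (m < k)%N)
  (X : 'I_k -> {RV P >-> R}) (mu : 'I_k -> R)
  (hmu : forall l, 'E_P[X l] = (mu l)%:E)
  (hord : forall a b : 'I_k, (a < b)%N -> mu b < mu a)
  (hA2 : forall l, assumption2 (cgf P (X l)))
  (hA3 : forall l, assumption3 (cgf P (X l)))
  (hA4 : forall x : R, (exists a b : 'I_k, mu a <= x <= mu b) ->
           forall l, interior (grad_range (cgf P (X l))) x)
  (i j : 'I_k) (hi : (i < m)%N) (hj : (m <= j)%N)
  (ri rj : R) (hri : 0 < ri) (hrj : 0 < rj) :
  let f := fun x : R => (ri%:E * legendre (cgf P (X i)) x
                         + rj%:E * legendre (cgf P (X j)) x)%E in
  exists x : R, (forall y, (f x <= f y)%E) /\
    (forall z, (forall y, (f z <= f y)%E) -> z = x).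
Proof.
move=> f.
have mXl l : measurable_fun setT (X l) := measurable_funPT (X l).
have ij : (i < j)%N by apply: leq_trans hi hj.
have muij : mu j < mu i := hord i j ij.
have [_ cti dfi _] := hA3 i.
have [_ ctj dfj _] := hA3 j.
have Di0 : derive1 (Lfin (cgf P (X i))) 0 = mu i.
  exact: (cgf_deriv0 (mXl i) (hmu i) (hA2 i) (dfi 0 (hA2 i))).
have Dj0 : derive1 (Lfin (cgf P (X j))) 0 = mu j.
  exact: (cgf_deriv0 (mXl j) (hmu j) (hA2 j) (dfj 0 (hA2 j))).
have [si dsi Dsi] : exists2 s, dom_int (cgf P (X i)) s &
    derive1 (Lfin (cgf P (X i))) s = mu j.
  have : exists a b : 'I_k, mu a <= mu j <= mu b by exists j, j; rewrite lexx.
  by move=> /hA4 /(_ i) /interior_subset [s ds <-]; exists s.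
have [sj dsj Dsj] : exists2 s, dom_int (cgf P (X j)) s &
    derive1 (Lfin (cgf P (X j))) s = mu i.
  have : exists a b : 'I_k, mu a <= mu i <= mu b by exists i, i; rewrite lexx.
  by move=> /hA4 /(_ j) /interior_subset [s ds <-]; exists s.
have si0 : si < 0.
  rewrite ltNge; apply/negP => si0.
  have := deriv_mono (mXl i) (hmu i) (hA2 i) dsi (dfi _ (hA2 i)) (dfi _ dsi) si0.
  by rewrite Di0 Dsi; clear -muij; lra.
have sj0 : 0 < sj.
  rewrite ltNge; apply/negP => sj0.
  have := deriv_mono (mXl j) (hmu j) dsj (hA2 j) (dfj _ dsj) (dfj _ (hA2 j)) sj0.
  by rewrite Dj0 Dsj; clear -muij; lra.
have c0 : 0 < ri / rj by exact: divr_gt0.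
have domj t : 0 <= t <= sj -> dom_int (cgf P (X j)) t.
  by move=> ht; apply: (dom_int_between (mXl j) (hmu j) (hA2 j) dsj).
have domi t : si <= t <= 0 -> dom_int (cgf P (X i)) t.
  by move=> ht; apply: (dom_int_between (mXl i) (hmu i) dsi (hA2 i)).
have [t0 [t0i t00 ut0 ut0j gt0]] : exists t0, [/\ si <= t0, t0 < 0,
    0 <= - (ri / rj) * t0, - (ri / rj) * t0 <= sj &
    derive1 (Lfin (cgf P (X i))) t0 <= derive1 (Lfin (cgf P (X j))) (- (ri / rj) * t0)].
  have E1 : sj / (ri / rj) * (ri / rj) = sj by rewrite divfK // gt_eqF.
  case: (leP (- (sj / (ri / rj))) si) => hc.
  - have h1 : 0 <= - (ri / rj) * si by clear -c0 si0; nra.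
    have h2 : - (ri / rj) * si <= sj by clear -c0 hc E1; nra.
    exists si; split => //.
    rewrite Dsi -Dj0.
    have hb : 0 <= - (ri / rj) * si <= sj by rewrite h1 h2.
    have hd := domj _ hb.
    exact: (deriv_mono (mXl j) (hmu j) (hA2 j) hd (dfj _ (hA2 j)) (dfj _ hd) h1).
  - have E2 : - (ri / rj) * - (sj / (ri / rj)) = sj by rewrite mulNr mulrN opprK mulrC E1.
    have t0n : - (sj / (ri / rj)) < 0 by rewrite oppr_lt0 divr_gt0.
    exists (- (sj / (ri / rj))); rewrite E2; split => //; [exact: ltW | exact: ltW |].
    rewrite Dsj -Di0.
    have h1 : si <= - (sj / (ri / rj)) <= 0 by rewrite (ltW hc) ltW.
    apply: (deriv_mono (mXl i) (hmu i) (domi _ h1) (hA2 i) (dfi _ (domi _ h1)) (dfi _ (hA2 i))).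
    exact: ltW.
pose psi := fun t => ri * Lfin (cgf P (X i)) t + rj * Lfin (cgf P (X j)) (- (ri / rj) * t).
have domt t : t0 <= t <= 0 ->
    dom_int (cgf P (X i)) t /\ dom_int (cgf P (X j)) (- (ri / rj) * t).
  move=> /andP[h1 h2]; split.
  - by apply: domi; apply/andP; split => //; apply: le_trans h1.
  - apply: domj; apply/andP; split; clear -c0 h1 h2 ut0j; nra.
have [tm tmin Hmin] : exists2 tm, t0 <= tm <= 0 & forall t, t0 <= t <= 0 -> psi tm <= psi t.
  have hc : {within `[t0, 0], continuous psi}.
    apply: continuous_in_subspaceT => t.
    rewrite inE /= in_itv /= => ht.
    have [h1 h2] := domt t ht.
    exact: psi_cont (cti t h1) (ctj _ h2).
  have [tm tmin H] := EVT_min (ltW t00) hc.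
  by exists tm; [move: tmin; rewrite in_itv | move=> t ht; apply: H; rewrite in_itv].
have [dtm dum] := domt tm tmin.
have [tmt0 tm0] := andP tmin.
have HL : t0 < tm -> derive1 (Lfin (cgf P (X i))) tm <=
    derive1 (Lfin (cgf P (X j))) (- (ri / rj) * tm).
  move=> lt.
  apply: (min_left (e := tm - t0) (dfi _ dtm) (dfj _ dum) hri hrj); first by rewrite subr_gt0.
  move=> h /andP[h0 he].
  have hb : t0 <= tm - h <= 0 by apply/andP; split; clear -h0 he tm0; lra.
  have := Hmin _ hb; rewrite /psi.
  by rewrite (_ : - (ri / rj) * (tm - h) = - (ri / rj) * tm + ri / rj * h) //; ring.
have HR : tm < 0 -> derive1 (Lfin (cgf P (X j))) (- (ri / rj) * tm) <=
    derive1 (Lfin (cgf P (X i))) tm.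
  move=> lt.
  apply: (min_right (e := - tm) (dfi _ dtm) (dfj _ dum) hri hrj); first by rewrite oppr_gt0.
  move=> h /andP[h0 he].
  have hb : t0 <= tm + h <= 0 by apply/andP; split; clear -h0 he tmt0; lra.
  have := Hmin _ hb; rewrite /psi.
  by rewrite (_ : - (ri / rj) * (tm + h) = - (ri / rj) * tm - ri / rj * h) //; ring.
have tmn : tm < 0.
  rewrite lt_neqAle tm0 andbT; apply/eqP => tmE.
  have := HL (ltac:(by rewrite tmE)).
  by rewrite tmE mulr0 Di0 Dj0; clear -muij; lra.
have Deq : derive1 (Lfin (cgf P (X i))) tm = derive1 (Lfin (cgf P (X j))) (- (ri / rj) * tm).
  apply/eqP; rewrite eq_le (HR tmn) andbT.
  case: (ltP t0 tm) => [/HL //|le].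
  have -> : tm = t0 by apply/eqP; rewrite eq_le le tmt0.
  exact: gt0.
have Ti := tangent (mXl i) (hmu i) dtm (dfi _ dtm).
have Tj := tangent (mXl j) (hmu j) dum (dfj _ dum).
have fin_i := cgf_fin (mXl i) (hmu i) (dom_int_sub dtm).
have fin_j := cgf_fin (mXl j) (hmu j) (dom_int_sub dum).
have supp_i : forall z, (forall l, (l * z)%:E - cgf P (X i) l <=
    (tm * z - Lfin (cgf P (X i)) tm)%:E)%E -> derive1 (Lfin (cgf P (X i))) tm = z.
  move=> z H.
  have [e e0 He] := (nbhsRP _ _).1 dtm.
  apply: (deriv_support (dfi _ dtm) e0) => y hy.
  have dy := He y hy.
  have := H y; rewrite (cgf_fin (mXl i) (hmu i) dy) -EFinB lee_fin.
  by clear -hri; lra.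
have supp_j : forall z, (forall l, (l * z)%:E - cgf P (X j) l <=
    (- (ri / rj) * tm * z - Lfin (cgf P (X j)) (- (ri / rj) * tm))%:E)%E ->
    derive1 (Lfin (cgf P (X j))) (- (ri / rj) * tm) = z.
  move=> z H.
  have [e e0 He] := (nbhsRP _ _).1 dum.
  apply: (deriv_support (dfj _ dum) e0) => y hy.
  have dy := He y hy.
  have := H y; rewrite (cgf_fin (mXl j) (hmu j) dy) -EFinB lee_fin.
  by clear -hri; lra.
have up_i : forall z, (forall l, (l * z)%:E - cgf P (X i) l <=
    (tm * z - Lfin (cgf P (X i)) tm)%:E)%E ->
    (legendre (cgf P (X i)) z <= (tm * z - Lfin (cgf P (X i)) tm)%:E)%E.
  by move=> z H; apply: leg_le.
have tan_i : forall l, ((l * derive1 (Lfin (cgf P (X i))) tm)%:E - cgf P (X i) l <=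
    (tm * derive1 (Lfin (cgf P (X i))) tm - Lfin (cgf P (X i)) tm)%:E)%E.
  move=> l; case: (cgf_cases (mXl i) (hmu i) l) => [->|[r [Er r0 Lr]]].
    by rewrite /= leNye.
  have dl : dom_eff (cgf P (X i)) l by apply/(dom_effP (mXl i) (hmu i)); exists r.
  rewrite (cgf_fin (mXl i) (hmu i) dl) -EFinB lee_fin.
  have := Ti l dl; by clear; lra.
have tan_j : forall l, ((l * derive1 (Lfin (cgf P (X j))) (- (ri / rj) * tm))%:E - cgf P (X j) l <=
    (- (ri / rj) * tm * derive1 (Lfin (cgf P (X j))) (- (ri / rj) * tm)
      - Lfin (cgf P (X j)) (- (ri / rj) * tm))%:E)%E.
  move=> l; case: (cgf_cases (mXl j) (hmu j) l) => [->|[r [Er r0 Lr]]].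
    by rewrite /= leNye.
  have dl : dom_eff (cgf P (X j)) l by apply/(dom_effP (mXl j) (hmu j)); exists r.
  rewrite (cgf_fin (mXl j) (hmu j) dl) -EFinB lee_fin.
  have := Tj l dl; by clear; lra.
rewrite -Deq in tan_j supp_j.
move: tan_i tan_j supp_i supp_j fin_i fin_j.
set xs := derive1 (Lfin (cgf P (X i))) tm.
set um := - (ri / rj) * tm.
set Fi := Lfin (cgf P (X i)).
set Fj := Lfin (cgf P (X j)).
move=> tan_i tan_j supp_i supp_j fin_i fin_j.
set C := - (ri * Fi tm + rj * Fj um).
have C_eq : forall y, ri * (tm * y - Fi tm) + rj * (um * y - Fj um) = C.
  by move=> y; rewrite /C /um; field; rewrite gt_eqF.
have key_lo : forall y, (C%:E <= f y)%E.
  move=> y; rewrite -(C_eq y) /f EFinD !EFinM.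
  apply: leeD; (apply: lee_wpmul2l; first by rewrite lee_fin ltW).
  - by have := leg_ge (cgf P (X i)) y tm; rewrite fin_i -EFinB.
  - by have := leg_ge (cgf P (X j)) y um; rewrite fin_j -EFinB.
have key_hi : (f xs <= C%:E)%E.
  rewrite -(C_eq xs) /f EFinD !EFinM.
  by apply: leeD; (apply: lee_wpmul2l; first by rewrite lee_fin ltW); exact: leg_le.
exists xs; split; first by move=> y; apply: le_trans key_hi (key_lo y).
move=> z Hz.
have hz : (f z <= C%:E)%E := le_trans (Hz xs) key_hi.
have lowA : ((tm * z - Fi tm)%:E <= legendre (cgf P (X i)) z)%E.
  by have := leg_ge (cgf P (X i)) z tm; rewrite fin_i -EFinB.
have lowB : ((um * z - Fj um)%:E <= legendre (cgf P (X j)) z)%E.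
  by have := leg_ge (cgf P (X j)) z um; rewrite fin_j -EFinB.
have rip : (ri%:E * +oo = +oo)%E by rewrite mulry gtr0_sg // mul1e.
have rjp : (rj%:E * +oo = +oo)%E by rewrite mulry gtr0_sg // mul1e.
have eqA : (legendre (cgf P (X i)) z <= (tm * z - Fi tm)%:E)%E.
  move: hz lowA lowB; rewrite /f -(C_eq z).
  case: (legendre (cgf P (X i)) z) => [a| |]; case: (legendre (cgf P (X j)) z) => [b| |] //=.
  - rewrite -!EFinM -EFinD !lee_fin => h1 h2 h3; clear -h1 h2 h3 hri hrj; nra.
  all: rewrite ?rip ?rjp -?EFinM /=; rewrite ?addey ?addye //.
by apply/esym/supp_i => l; apply: le_trans (leg_ge _ z l) eqA.
Qed.
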